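(* Let $G$ be a ground term whose set of free variables is exactly $\{x_1,\dots,x_n\}$, $\vec x=x_1,\dots,x_n$, and let $a$ be a fresh variable. Then $|\mathbf{bp}_{\vec x,a}(G)|=O(|G|)$, the implied constant depending only on the maximal arity of function symbols in $\mathcal F$.
   Context: Fix finite sets of function symbols $\mathcal F\subseteq\mathcal F'$, each symbol with an arity, $\mathcal F'$ containing a binary multiplication symbol written infix $t\cdot u$, together with partial maps $\partial_i:\mathcal F\to\mathcal F'$ ($i\ge1$) such that for every $f\in\mathcal F$ of arity $k$ and $1\le i\le k$, $\partial_i f$ is defined and has arity $k$. Terms of the calculus include: variables, numerals $\underline r$ ($r\in\mathbb R$), applications $f(t_1,\dots,t_k)$ of function symbols, pairs $\langle t,u\rangle$ (with $\langle t_1,\dots,t_n\rangle:=\langle t_1,\langle\dots\langle t_{n-1},t_n\rangle\dots\rangle\rangle$), sums $t+u$, and explicit substitutions $t[x\leftarrow u]$ (read ''let $x=u$ in $t$'', binding $x$ in $t$). A substitution context is $\alpha=\{\cdot\}[p_1\leftarrow t_1]\cdots[p_m\leftarrow t_m]$ ($m\ge0$); $t\alpha$ denotes $t[p_1\leftarrow t_1]\cdots[p_m\leftarrow t_m]$. $|t|$ (size) is the number of symbols in $t$. Ground terms: $F,G::=x\mid F[x\leftarrow G]\mid f(x_1,\dots,x_k)\mid\underline r\mid F+G$, with $x,x_i$ variables of type $\mathsf R$ and $f\in\mathcal F$. For ground terms, $F_0\oplus F_1:=F_1$ if $F_0=\underline 0$, $:=F_0$ if $F_1=\underline 0$ (and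 $F_0\neq\underline 0$), and $:=F_0+F_1$ otherwise. DEFINITION of $\mathbf{bp}$: for a sequence $\vec x=x_1,\dots,x_n$ of distinct variables containing the free variables of a ground term $G$ and a fresh variable $a$, the term $\mathbf{bp}_{\vec x,a}(G)$ (of type $\mathsf R\times\mathsf R^n$) always has the shape $\langle G_0,\langle G_1,\dots,G_n\rangle\alpha\rangle\beta$ with $\alpha,\beta$ substitution contexts and $a$ not free in $G_0$ nor in $\beta$, and is defined by induction on $G$: - $\mathbf{bp}_{\vec x,a}(x_i):=\langle x_i,\langle\underline0,\dots,a,\dots,\underline0\rangle\rangle$ ($a$ at position $i$); - $\mathbf{bp}_{\vec x,a}(\underline r):=\langle\underline r,\langle\underline0,\dots,\underline0\rangle\rangle$; - if $f$ has arity $k$ and $\vec y=y_1,\dots,y_k$ is a subsequence of $\vec x$: $\mathbf{bp}_{\vec x,a}(f(\vec y)):=\langle f(\vec y),\langle\dots\rangle\rangle$ where the $n$-tuple has $\partial_j f(\vec y)\cdot a$ at the position of $y_j$ in $\vec x$ ($1\le j\le k$) and $\underline 0$ elsewhere; - if $G=F'[z\leftarrow F'']$, let $b$ be a new variable, $\mathbf{bp}_{\vec x,z,a}(F')=\langle F'_0,\langle F'_1,\dots,F'_n,H\rangle\alpha'\rangle\beta'$ and $\mathbf{bp}_{\vec x,b}(F'')=\langle F''_0,\langle F''_1,\dots,F''_n\rangle\alpha''\rangle\beta''$ (with bound variables renamed apart); then $\mathbf{bp}_{\vec x,a}(G):=\langle F'_0,\langle F'_1,\dots,F'_n\rangle\alpha'\rangle\beta'[z\leftarrow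 F''_0]\beta''$ if $H=\underline0$, and otherwise $\mathbf{bp}_{\vec x,a}(G):=\langle F'_0,\langle F'_1\oplus F''_1,\dots,F'_n\oplus F''_n\rangle\alpha''[b\leftarrow H]\alpha'\rangle\beta'[z\leftarrow F''_0]\beta''$; - if $G=F'+F''$ with $\mathbf{bp}_{\vec x,a}(F')=\langle F'_0,\langle F'_1,\dots,F'_n\rangle\alpha'\rangle\beta'$ and $\mathbf{bp}_{\vec x,a}(F'')=\langle F''_0,\langle F''_1,\dots,F''_n\rangle\alpha''\rangle\beta''$, then $\mathbf{bp}_{\vec x,a}(G):=\langle F'_0+F''_0,\langle F'_1\oplus F''_1,\dots,F'_n\oplus F''_n\rangle\alpha'\alpha''\rangle\beta'\beta''$. *)

(* Defs.v *)
From Stdlib Require Import Reals List Arith Lia.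
Import ListNotations.
Open Scope nat_scope.

Definition var := nat.
Definition sym := nat.

(* A signature: finite sets F ⊆ F' (as lists), arities, the binary
   multiplication symbol of F', and the partial maps ∂_i : F -> F'. *)
Record signature := {
  symF : list sym;
  symF' : list sym;
  arity : sym -> nat;
  mul : sym;
  deriv : nat -> sym -> option sym
}.

Definition wf_sig (s : signature) : Prop :=
  incl (symF s) (symF' s) /\
  In (mul s) (symF' s) /\ arity s (mul s) = 2 /\
  (forall f, In f (symF s) -> forall i, 1 <= i <= arity s f ->
     exists g, deriv s i f = Some g /\ In g (symF' s) /\ arity s g = arity s f).

Definition max_arity (s : signature) : nat :=
  fold_right Nat.max 0 (map (arity s) (symF s)).

(* Terms of the calculus. [Let t x u] is the explicit substitution
   t[x <- u]; [Unit] is the empty tuple (used only when n = 0). *)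
Inductive term : Type :=
| Var : var -> term
| Num : R -> term
| App : sym -> list term -> term
| Pair : term -> term -> term
| Unit : term
| Add : term -> term -> term
| Let : term -> var -> term -> term.

Fixpoint tsize (t : term) : nat :=
  match t with
  | Var _ => 1
  | Num _ => 1
  | App _ ts =>
      S ((fix go (l : list term) : nat :=
            match l with [] => 0 | u :: l' => tsize u + go l' end) ts)
  | Pair t u => S (tsize t + tsize u)
  | Unit => 1
  | Add t u => S (tsize t + tsize u)
  | Let t x u => 2 + tsize t + tsize u
  end.

Inductive gterm : Type :=
| GVar : var -> gterm
| GLet : gterm -> var -> gterm -> gterm      (* GLet F z G = F[z <- G] *)
| GApp : sym -> list var -> gterm
| GNum : R -> gterm
| GAdd : gterm -> gterm -> gterm.

Fixpoint embed (G : gterm) : term :=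
  match G with
  | GVar x => Var x
  | GLet F z H => Let (embed F) z (embed H)
  | GApp f ys => App f (map Var ys)
  | GNum r => Num r
  | GAdd F H => Add (embed F) (embed H)
  end.

Definition gsize (G : gterm) : nat := tsize (embed G).

Fixpoint ground_wf (s : signature) (G : gterm) : Prop :=
  match G with
  | GVar _ => True
  | GLet F _ H => ground_wf s F /\ ground_wf s H
  | GApp f ys => In f (symF s) /\ length ys = arity s f
  | GNum _ => True
  | GAdd F H => ground_wf s F /\ ground_wf s H
  end.

Fixpoint free_vars (G : gterm) : list var :=
  match G with
  | GVar x => [x]
  | GLet F z H => remove Nat.eq_dec z (free_vars F) ++ free_vars H
  | GApp _ ys => ys
  | GNum _ => []
  | GAdd F H => free_vars F ++ free_vars H
  end.

Fixpoint all_vars (G : gterm) : list var :=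
  match G with
  | GVar x => [x]
  | GLet F z H => z :: all_vars F ++ all_vars H
  | GApp _ ys => ys
  | GNum _ => []
  | GAdd F H => all_vars F ++ all_vars H
  end.

Definition is_zero (t : term) : bool :=
  match t with
  | Num r => if Req_EM_T r 0%R then true else false
  | _ => false
  end.

Definition oplus (t u : term) : term :=
  if is_zero t then u else if is_zero u then t else Add t u.

(* substitution contexts {.}[p1<-t1]...[pm<-tm], as lists [(p1,t1);..] *)
Definition subctx := list (var * term).
Definition app_ctx (t : term) (al : subctx) : term :=
  fold_left (fun acc pu => Let acc (fst pu) (snd pu)) al t.

Fixpoint tuple (l : list term) : term :=
  match l with
  | [] => Unit
  | [t] => t
  | t :: l' => Pair t (tuple l')
  end.

(* result of bp: <G0, <G1..Gn> alpha> beta *)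
Record bpres := { r0 : term; rcomps : list term; ralpha : subctx; rbeta : subctx }.

Definition render (r : bpres) : term :=
  app_ctx (Pair (r0 r) (app_ctx (tuple (rcomps r)) (ralpha r))) (rbeta r).

(* position (0-based) of the LAST occurrence of y in xs (innermost binder) *)
Fixpoint lastpos_aux (y : var) (xs : list var) (i : nat) (acc : option nat)
  : option nat :=
  match xs with
  | [] => acc
  | x :: xs' => lastpos_aux y xs' (S i) (if Nat.eqb x y then Some i else acc)
  end.
Definition lastpos y xs := lastpos_aux y xs 0 None.

Definition opt_eqb (o : option nat) (i : nat) : bool :=
  match o with Some j => Nat.eqb i j | None => false end.

Definition dsym (s : signature) (j : nat) (f : sym) : sym :=
  match deriv s j f with Some g => g | None => f end.

Definition nth_t (i : nat) (l : list term) : term := nth i l (Num 0%R).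

(* bp_{xs,a}(G), threading a counter c of fresh variable names *)
Fixpoint bp_aux (s : signature) (xs : list var) (a : var) (G : gterm) (c : nat)
  : bpres * nat :=
  let n := length xs in
  match G with
  | GVar y =>
      ({| r0 := Var y;
          rcomps := map (fun i => if opt_eqb (lastpos y xs) i then Var a else Num 0%R)
                        (seq 0 n);
          ralpha := []; rbeta := [] |}, c)
  | GNum r =>
      ({| r0 := Num r; rcomps := repeat (Num 0%R) n; ralpha := []; rbeta := [] |}, c)
  | GApp f ys =>
      let arg := map Var ys in
      ({| r0 := App f arg;
          rcomps :=
            map (fun i =>
                   fold_left oplus
                     (map (fun j => App (mul s) [App (dsym s (S j) f) arg; Var a])
                          (filter (fun j => opt_eqb (lastpos (nth j ys 0) xs) i)
                                  (seq 0 (length ys))))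
                     (Num 0%R))
                (seq 0 n);
          ralpha := []; rbeta := [] |}, c)
  | GLet F1 z F2 =>
      let b := c in
      let (r1, c1) := bp_aux s (xs ++ [z]) a F1 (S c) in
      let (r2, c2) := bp_aux s xs b F2 c1 in
      let H := nth_t n (rcomps r1) in
      if is_zero H then
        ({| r0 := r0 r1; rcomps := firstn n (rcomps r1); ralpha := ralpha r1;
            rbeta := rbeta r1 ++ [(z, r0 r2)] ++ rbeta r2 |}, c2)
      else
        ({| r0 := r0 r1;
            rcomps := map (fun i => oplus (nth_t i (rcomps r1)) (nth_t i (rcomps r2)))
                          (seq 0 n);
            ralpha := ralpha r2 ++ [(b, H)] ++ ralpha r1;
            rbeta := rbeta r1 ++ [(z, r0 r2)] ++ rbeta r2 |}, c2)
  | GAdd F1 F2 =>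
      let (r1, c1) := bp_aux s xs a F1 c in
      let (r2, c2) := bp_aux s xs a F2 c1 in
      ({| r0 := Add (r0 r1) (r0 r2);
          rcomps := map (fun i => oplus (nth_t i (rcomps r1)) (nth_t i (rcomps r2)))
                        (seq 0 n);
          ralpha := ralpha r1 ++ ralpha r2;
          rbeta := rbeta r1 ++ rbeta r2 |}, c2)
  end.

Definition fresh_start (G : gterm) (xs : list var) (a : var) : nat :=
  S (fold_right Nat.max a (all_vars G ++ xs)).

Definition bp (s : signature) (xs : list var) (a : var) (G : gterm) : term :=
  render (fst (bp_aux s xs a G (fresh_start G xs a))).

(* Main.v *)
Require Import Defs.
From Stdlib Require Import Reals List Arith Lia.
Import ListNotations.
Open Scope nat_scope.

Definition wt (t : term) : nat := if is_zero t then 0 else S (tsize t).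
Definition lsum (l : list nat) : nat := fold_right plus 0 l.
Definition sumwt (l : list term) : nat := lsum (map wt l).
Definition ctxsize (al : subctx) : nat := lsum (map (fun p => 2 + tsize (snd p)) al).
Definition Mr (r : bpres) : nat :=
  tsize (r0 r) + sumwt (rcomps r) + ctxsize (ralpha r) + ctxsize (rbeta r).

Lemma is_zero0 : is_zero (Num 0%R) = true.
Proof. unfold is_zero. destruct (Req_EM_T 0 0); [reflexivity| congruence]. Qed.

Lemma wt0 : wt (Num 0%R) = 0.
Proof. unfold wt. now rewrite is_zero0. Qed.

Lemma tsize_wt t : tsize t <= S (wt t).
Proof. unfold wt. destruct (is_zero t) eqn:E; [|lia].
  destruct t; simpl in E; try discriminate. simpl. lia. Qed.

Lemma wt_oplus t u : wt (oplus t u) <= wt t + wt u.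
Proof.
  unfold oplus. destruct (is_zero t) eqn:Et; [lia|].
  destruct (is_zero u) eqn:Eu; [lia|].
  unfold wt at 1. simpl. unfold wt. rewrite Et, Eu. lia.
Qed.

Lemma lsum_app l1 l2 : lsum (l1 ++ l2) = lsum l1 + lsum l2.
Proof. induction l1; simpl; lia. Qed.

Lemma ctxsize_app a b : ctxsize (a ++ b) = ctxsize a + ctxsize b.
Proof. unfold ctxsize. now rewrite map_app, lsum_app. Qed.

Lemma ctxsize_cons p l : ctxsize (p :: l) = 2 + tsize (snd p) + ctxsize l.
Proof. reflexivity. Qed.

Lemma wt_fold l z : wt (fold_left oplus l z) <= wt z + sumwt l.
Proof.
  revert z; induction l as [|x l IH]; intros z; simpl; unfold sumwt in *; simpl.
  - lia.
  - specialize (IH (oplus z x)). pose proof (wt_oplus z x). lia.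
Qed.

Lemma lsum_le {A} (f g : A -> nat) L :
  (forall x, In x L -> f x <= g x) -> lsum (map f L) <= lsum (map g L).
Proof.
  induction L; simpl; intros H; [lia|].
  pose proof (H a (or_introl eq_refl)). pose proof (IHL (fun x h => H x (or_intror h))). lia.
Qed.

Lemma lsum_zero {A} (f : A -> nat) L :
  (forall x, In x L -> f x = 0) -> lsum (map f L) = 0.
Proof.
  induction L; simpl; intros H; [lia|].
  rewrite (H a (or_introl eq_refl)), (IHL (fun x h => H x (or_intror h))). lia.
Qed.

Lemma lsum_plus {A} (f g : A -> nat) L :
  lsum (map (fun x => f x + g x) L) = lsum (map f L) + lsum (map g L).
Proof. induction L; simpl; lia. Qed.

Lemma lsum_const {A} c (L : list A) : lsum (map (fun _ => c) L) = length L * c.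
Proof. induction L; simpl; lia. Qed.

Lemma lsum_swap {A B} (g : A -> B -> nat) I L :
  lsum (map (fun i => lsum (map (g i) L)) I) =
  lsum (map (fun j => lsum (map (fun i => g i j) I)) L).
Proof.
  induction L as [|j L IH]; simpl.
  - apply lsum_zero. auto.
  - rewrite lsum_plus. rewrite IH. reflexivity.
Qed.

Lemma nth_sum l n : lsum (map (fun i => wt (nth_t i l)) (seq 0 n)) <= sumwt l.
Proof.
  revert n; induction l as [|x l IH]; intros n.
  - rewrite lsum_zero; [lia|]. intros i _. unfold nth_t. destruct i; apply wt0.
  - destruct n as [|n]; simpl; [lia|].
    rewrite <- seq_shift, map_map. unfold sumwt; simpl.
    specialize (IH n). unfold nth_t in *. simpl. fold (sumwt l). apply Nat.add_le_mono_l; exact IH.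
Qed.

Lemma single o c k n :
  lsum (map (fun i => if opt_eqb o i then c else 0) (seq k n)) <= c.
Proof.
  destruct o as [j|].
  - revert k; induction n as [|n IH]; intros k; simpl; [lia|].
    destruct (Nat.eqb k j) eqn:E.
    + apply Nat.eqb_eq in E; subst.
      rewrite lsum_zero; [lia|]. intros i Hi. apply in_seq in Hi.
      destruct (Nat.eqb i j) eqn:E2; [apply Nat.eqb_eq in E2; lia|reflexivity].
    + specialize (IH (S k)). exact IH.
  - rewrite lsum_zero; [lia|]. reflexivity.
Qed.

Lemma sumwt_filter (P : nat -> bool) (h : nat -> term) L :
  sumwt (map h (filter P L)) = lsum (map (fun j => if P j then wt (h j) else 0) L).
Proof.
  induction L; simpl; [reflexivity|]. destruct (P a); simpl; unfold sumwt in *; simpl; lia.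
Qed.

Lemma tsize_appvar f ys : tsize (App f (map Var ys)) = S (length ys).
Proof. induction ys; simpl in *; lia. Qed.

Lemma gsize_app f ys : gsize (GApp f ys) = S (length ys).
Proof. apply tsize_appvar. Qed.

Lemma arity_le s f : In f (symF s) -> arity s f <= max_arity s.
Proof.
  unfold max_arity. induction (symF s); simpl; [tauto|].
  intros [->|H]; [lia|]. specialize (IHl H). lia.
Qed.

Lemma inv (K : nat) s (HK : max_arity s <= K) :
  forall G xs a c, ground_wf s G -> Mr (fst (bp_aux s xs a G c)) <= (K + 5) * gsize G.
Proof.
  induction G as [y|F1 IH1 z F2 IH2|f ys|r|F1 IH1 F2 IH2]; intros xs a c Hwf.
  - simpl. unfold Mr, sumwt, ctxsize; simpl. rewrite map_map.
    pose proof (lsum_le (fun i => wt (if opt_eqb (lastpos y xs) i then Var a else Num 0%R))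
                 (fun i => if opt_eqb (lastpos y xs) i then 2 else 0) (seq 0 (length xs))) as L.
    pose proof (single (lastpos y xs) 2 0 (length xs)).
    assert (lsum (map (fun i => wt (if opt_eqb (lastpos y xs) i then Var a else Num 0%R)) (seq 0 (length xs))) <= 2).
    { etransitivity; [apply L|exact H]. intros i _. destruct (opt_eqb _ _); [reflexivity|rewrite wt0; lia]. }
    unfold gsize; simpl. lia.
  - simpl in Hwf. destruct Hwf as [W1 W2].
    cbn [bp_aux].
    destruct (bp_aux s (xs ++ [z]) a F1 (S c)) as [r1 c1] eqn:E1.
    destruct (bp_aux s xs c F2 c1) as [r2 c2] eqn:E2.
    specialize (IH1 (xs ++ [z]) a (S c) W1). rewrite E1 in IH1.
    specialize (IH2 xs c c1 W2). rewrite E2 in IH2. simpl in IH1, IH2.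
    assert (Hg : gsize (GLet F1 z F2) = 2 + gsize F1 + gsize F2) by reflexivity.
    rewrite Hg. unfold Mr in *.
    pose proof (nth_sum (rcomps r1) (S (length xs))) as N1.
    rewrite seq_S, map_app, lsum_app in N1. simpl in N1.
    pose proof (nth_sum (rcomps r2) (length xs)) as N2.
    destruct (is_zero (nth_t (length xs) (rcomps r1))) eqn:EH; simpl.
    + rewrite !ctxsize_app, !ctxsize_cons. simpl.
      assert (sumwt (firstn (length xs) (rcomps r1)) <= sumwt (rcomps r1)).
      { rewrite <- (firstn_skipn (length xs) (rcomps r1)) at 2. unfold sumwt.
        rewrite map_app, lsum_app. lia. }
      lia.
    + rewrite !ctxsize_app, !ctxsize_cons. simpl.
      unfold sumwt at 1. rewrite map_map.
      pose proof (lsum_le (fun i => wt (oplus (nth_t i (rcomps r1)) (nth_t i (rcomps r2))))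
        (fun i => wt (nth_t i (rcomps r1)) + wt (nth_t i (rcomps r2))) (seq 0 (length xs))
        (fun i _ => wt_oplus _ _)) as L.
      rewrite lsum_plus in L.
      assert (2 + tsize (nth_t (length xs) (rcomps r1)) = 1 + wt (nth_t (length xs) (rcomps r1))).
      { unfold wt. rewrite EH. lia. }
      lia.
  - simpl in Hwf. destruct Hwf as [Hin Hlen].
    pose proof (arity_le s f Hin) as Ha.
    assert (Hk : length ys <= K) by lia.
    rewrite gsize_app. cbn [bp_aux fst]. unfold Mr. cbn [r0 rcomps ralpha rbeta].
    unfold ctxsize; cbn [map lsum fold_right].
    rewrite tsize_appvar. unfold sumwt. rewrite map_map.
    set (k := length ys).
    set (g := fun i j => if opt_eqb (lastpos (nth j ys 0) xs) i then k + 4 else 0).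
    assert (H1 : lsum (map (fun i => wt (fold_left oplus
        (map (fun j => App (mul s) [App (dsym s (S j) f) (map Var ys); Var a])
           (filter (fun j => opt_eqb (lastpos (nth j ys 0) xs) i) (seq 0 (length ys))))
        (Num 0%R))) (seq 0 (length xs)))
       <= lsum (map (fun i => lsum (map (g i) (seq 0 k))) (seq 0 (length xs)))).
    { apply lsum_le. intros i _. etransitivity; [apply wt_fold|]. rewrite wt0, sumwt_filter.
      apply Nat.eq_le_incl. simpl. f_equal. apply map_ext. intros j. unfold g.
      destruct (opt_eqb _ _); [|reflexivity]. unfold wt. cbn [is_zero].
      pose proof (tsize_appvar (dsym s (S j) f) ys) as T. cbn [tsize] in T |- *.
      fold k in T. lia. }
    rewrite lsum_swap in H1.
    assert (H2 : lsum (map (fun j => lsum (map (fun i => g i j) (seq 0 (length xs)))) (seq 0 k))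
                 <= lsum (map (fun _ => k + 4) (seq 0 k))).
    { apply lsum_le. intros j _. unfold g. apply single. }
    rewrite lsum_const, length_seq in H2.
    assert (k * (k + 4) <= k * (K + 4)) by nia.
    change (length ys) with k in H1. nia.
  - simpl. unfold Mr, sumwt, ctxsize; simpl.
    rewrite lsum_zero. { unfold gsize; simpl. lia. }
    intros x Hx. apply repeat_spec in Hx. subst. apply wt0.
  - simpl in Hwf. destruct Hwf as [W1 W2].
    cbn [bp_aux].
    destruct (bp_aux s xs a F1 c) as [r1 c1] eqn:E1.
    destruct (bp_aux s xs a F2 c1) as [r2 c2] eqn:E2.
    specialize (IH1 xs a c W1). rewrite E1 in IH1.
    specialize (IH2 xs a c1 W2). rewrite E2 in IH2. simpl in IH1, IH2.
    assert (Hg : gsize (GAdd F1 F2) = 1 + gsize F1 + gsize F2) by reflexivity.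
    rewrite Hg. unfold Mr in *. simpl.
    pose proof (nth_sum (rcomps r1) (length xs)) as N1.
    pose proof (nth_sum (rcomps r2) (length xs)) as N2.
    rewrite !ctxsize_app.
    unfold sumwt at 1. rewrite map_map.
    pose proof (lsum_le (fun i => wt (oplus (nth_t i (rcomps r1)) (nth_t i (rcomps r2))))
      (fun i => wt (nth_t i (rcomps r1)) + wt (nth_t i (rcomps r2))) (seq 0 (length xs))
      (fun i _ => wt_oplus _ _)) as L.
    rewrite lsum_plus in L. lia.
Qed.

Lemma length_rcomps s xs a G c :
  length (rcomps (fst (bp_aux s xs a G c))) <= length xs.
Proof.
  destruct G as [y|F1 z F2|f ys|r|F1 F2]; cbn [bp_aux].
  - simpl. rewrite length_map, length_seq. lia.
  - destruct (bp_aux s (xs ++ [z]) a F1 (S c)) as [r1 c1].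
    destruct (bp_aux s xs c F2 c1) as [r2 c2].
    destruct (is_zero _); simpl.
    + rewrite length_firstn. lia.
    + rewrite length_map, length_seq. lia.
  - simpl. rewrite length_map, length_seq. lia.
  - simpl. rewrite repeat_length. lia.
  - destruct (bp_aux s xs a F1 c) as [r1 c1].
    destruct (bp_aux s xs a F2 c1) as [r2 c2]. simpl.
    rewrite length_map, length_seq. lia.
Qed.

Lemma tsize_app_ctx al : forall t, tsize (app_ctx t al) = tsize t + ctxsize al.
Proof.
  induction al as [|[p u] al IH]; intros t; [simpl; unfold ctxsize; simpl; lia|].
  unfold app_ctx in *. simpl. rewrite IH. rewrite ctxsize_cons. simpl. lia.
Qed.

Lemma tsize_tuple l : tsize (tuple l) <= lsum (map tsize l) + length l + 1.
Proof.
  induction l as [|x l IH]; [simpl; lia|].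
  destruct l as [|y l]; simpl in *; lia.
Qed.

Lemma lsum_tsize l : lsum (map tsize l) <= sumwt l + length l.
Proof.
  induction l as [|x l IH]; [simpl; lia|]. unfold sumwt in *; simpl.
  pose proof (tsize_wt x). lia.
Qed.

Lemma fv_len G : length (free_vars G) <= gsize G.
Proof.
  induction G; cbn [free_vars].
  - unfold gsize; simpl; lia.
  - rewrite length_app. pose proof (remove_length_le Nat.eq_dec (free_vars G1) v).
    change (gsize (GLet G1 v G2)) with (2 + gsize G1 + gsize G2). eapply Nat.le_trans; [apply Nat.add_le_mono_r; apply remove_length_le|]. unfold var in *. lia.
  - rewrite gsize_app. lia.
  - unfold gsize; simpl; lia.
  - rewrite length_app. change (gsize (GAdd G1 G2)) with (1 + gsize G1 + gsize G2). unfold var in *. lia.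
Qed.

Lemma gsize_pos G : 1 <= gsize G.
Proof. destruct G; unfold gsize; simpl; lia. Qed.

Theorem lemma5p1 :
  forall K : nat, exists C : nat,
  forall s : signature, wf_sig s -> max_arity s <= K ->
  forall (G : gterm) (xs : list var) (a : var),
    ground_wf s G ->
    NoDup xs ->
    (forall v, In v (free_vars G) <-> In v xs) ->
    ~ In a xs -> ~ In a (all_vars G) ->
    tsize (bp s xs a G) <= C * gsize G.
Proof.
  intros K. exists (K + 9). intros s _ HK G xs a Hwf Hnd Hfv _ _.
  unfold bp, render.
  set (r := fst (bp_aux s xs a G (fresh_start G xs a))).
  pose proof (inv K s HK G xs a (fresh_start G xs a) Hwf) as HM. fold r in HM.
  pose proof (length_rcomps s xs a G (fresh_start G xs a)) as HL. fold r in HL.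
  rewrite tsize_app_ctx. simpl. rewrite tsize_app_ctx.
  pose proof (tsize_tuple (rcomps r)). pose proof (lsum_tsize (rcomps r)).
  assert (Hn : length xs <= gsize G).
  { etransitivity; [|apply fv_len]. apply NoDup_incl_length; [exact Hnd|].
    intros v Hv. apply Hfv. exact Hv. }
  pose proof (gsize_pos G). unfold Mr in HM. nia.
Qed.
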